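(* Let $(a_n)\in\ell_1$ with $\sum_n|a_n|=1$ and $\frac12<\sup_{n\in\mathbb N}|a_n|<1$. Then the hyperplane $Y=\{x\in c_0:\sum_n a_nx_n=0\}$ has property-$(SU)$ in $c_0$ but does not have property-$(HB)$ in $c_0$.
   Context: $c_0$ carries the sup norm and $c_0^*=\ell_1$. $Y^\perp=\{x^*\in\ell_1:x^*|_Y=0\}$. $Y$ has property-$(SU)$ in $X$ if there is a bounded linear projection $P$ on $X^*$ with range $Y^\perp$ such that, with $G=(I-P)(X^* )$, for every $x^*=y^\#+y^\perp$ with $y^\#\in G$, $0\ne y^\perp\in Y^\perp$, one has $\|x^*\|>\|y^\#\|$. $Y$ has property-$(HB)$ in $X$ if moreover such a $P$ can be chosen with $\|P\|=1$ and also $\|x^*\|\ge\|y^\perp\|$ for all such decompositions. *)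

(* Defs.v *)
From Stdlib Require Import Reals.
From Coquelicot Require Import Coquelicot.
Open Scope R_scope.

Definition seqR := nat -> R.

Definition in_c0 (x : seqR) : Prop := is_lim_seq x 0.

(* ell_1 = c_0^* *)
Definition in_l1 (b : seqR) : Prop := ex_series (fun n => Rabs (b n)).
Definition l1norm (b : seqR) : R := Series (fun n => Rabs (b n)).

Definition pairing (b x : seqR) : R := Series (fun n => b n * x n).

Definition seq_add (u v : seqR) : seqR := fun n => u n + v n.
Definition seq_sub (u v : seqR) : seqR := fun n => u n - v n.
Definition seq_scal (c : R) (u : seqR) : seqR := fun n => c * u n.
Definition seq_zero : seqR := fun _ => 0.

Definition annihilator (Y : seqR -> Prop) (b : seqR) : Prop :=
  in_l1 b /\ forall y, Y y -> pairing b y = 0.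

Definition bdd_lin_proj_onto (P : seqR -> seqR) (M : seqR -> Prop) : Prop :=
  (forall x, in_l1 x -> in_l1 (P x)) /\
  (forall x y, in_l1 x -> in_l1 y -> P (seq_add x y) = seq_add (P x) (P y)) /\
  (forall c x, in_l1 x -> P (seq_scal c x) = seq_scal c (P x)) /\
  (exists C, forall x, in_l1 x -> l1norm (P x) <= C * l1norm x) /\
  (forall x, in_l1 x -> P (P x) = P x) /\
  (forall x, in_l1 x -> M (P x)) /\
  (forall m, M m -> exists x, in_l1 x /\ P x = m).

Definition compl_range (P : seqR -> seqR) (g : seqR) : Prop :=
  exists x, in_l1 x /\ g = seq_sub x (P x).

Definition SU_ineq (Y : seqR -> Prop) (P : seqR -> seqR) : Prop :=
  forall g yp, compl_range P g -> annihilator Y yp -> yp <> seq_zero ->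
    l1norm (seq_add g yp) > l1norm g.

Definition opnorm_eq1 (P : seqR -> seqR) : Prop :=
  (forall x, in_l1 x -> l1norm (P x) <= 1 * l1norm x) /\
  (forall c, (forall x, in_l1 x -> l1norm (P x) <= c * l1norm x) -> 1 <= c).

Definition property_SU (Y : seqR -> Prop) : Prop :=
  exists P, bdd_lin_proj_onto P (annihilator Y) /\ SU_ineq Y P.

Definition property_HB (Y : seqR -> Prop) : Prop :=
  exists P, bdd_lin_proj_onto P (annihilator Y) /\ SU_ineq Y P /\
    opnorm_eq1 P /\
    (forall g yp, compl_range P g -> annihilator Y yp -> yp <> seq_zero ->
       l1norm (seq_add g yp) >= l1norm yp).

Definition hyperplane (a : seqR) (x : seqR) : Prop :=
  in_c0 x /\ pairing a x = 0.

(* Main.v *)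
Require Import Defs.
From Stdlib Require Import Reals Lra Lia FunctionalExtensionality Classical.
From Coquelicot Require Import Coquelicot.
Open Scope R_scope.

Definition single (k : nat) (c : R) : nat -> R := fun n => if Nat.eqb n k then c else 0.

Lemma sum_single k c N : sum_n (single k c) N = if Nat.ltb N k then 0 else c.
Proof.
  induction N.
  - rewrite sum_O. unfold single. destruct k; simpl; reflexivity.
  - rewrite sum_Sn, IHN. unfold single. change plus with Rplus.
    destruct (Nat.ltb N k) eqn:E1, (Nat.ltb (S N) k) eqn:E2, (Nat.eqb (S N) k) eqn:E3;
    apply Nat.ltb_lt in E1 || apply Nat.ltb_ge in E1;
    apply Nat.ltb_lt in E2 || apply Nat.ltb_ge in E2;
    apply Nat.eqb_eq in E3 || apply Nat.eqb_neq in E3; try lia; lra.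
Qed.

Lemma is_series_single k c : is_series (single k c) c.
Proof.
  change (is_lim_seq (sum_n (single k c)) c).
  apply is_lim_seq_ext_loc with (fun _ => c); [|apply is_lim_seq_const].
  exists k. intros n Hn. rewrite sum_single.
  destruct (Nat.ltb n k) eqn:E; [apply Nat.ltb_lt in E; lia | reflexivity].
Qed.

Lemma single_lim k c : is_lim_seq (single k c) 0.
Proof.
  apply is_lim_seq_ext_loc with (fun _ => 0); [|apply is_lim_seq_const].
  exists (S k). intros n Hn. unfold single.
  destruct (Nat.eqb n k) eqn:E; [apply Nat.eqb_eq in E; lia | reflexivity].
Qed.

Lemma isD a b la lb : is_series a la -> is_series b lb -> is_series (fun n => a n + b n) (la + lb).
Proof. intros. exact (is_series_plus a b la lb H H0). Qed.
Lemma isB a b la lb : is_series a la -> is_series b lb -> is_series (fun n => a n - b n) (la - lb).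
Proof. intros. exact (is_series_minus a b la lb H H0). Qed.
Lemma isZ c a la : is_series a la -> is_series (fun n => c * a n) (c * la).
Proof. intros. exact (is_series_scal_l c a la H). Qed.

Lemma sum_n_mono f g N : (forall n, f n <= g n) -> sum_n f N <= sum_n g N.
Proof.
  intro H. induction N. rewrite !sum_O; auto.
  rewrite !sum_Sn. change plus with Rplus. specialize (H (S N)). lra.
Qed.

Lemma Series_le_gen f g : ex_series f -> ex_series g -> (forall n, f n <= g n) -> Series f <= Series g.
Proof.
  intros Hf Hg H.
  pose proof (Series_correct _ Hf) as A. pose proof (Series_correct _ Hg) as B.
  change (is_lim_seq (sum_n f) (Series f)) in A.
  change (is_lim_seq (sum_n g) (Series g)) in B.
  assert (C := is_lim_seq_le _ _ _ _ (fun n => sum_n_mono f g n H) A B).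
  exact C.
Qed.

Lemma single_abs k c n : Rabs (single k c n) = single k (Rabs c) n.
Proof. unfold single. destruct (Nat.eqb n k); auto using Rabs_R0. Qed.

Lemma term_le f k : (forall n, 0 <= f n) -> ex_series f -> f k <= Series f.
Proof.
  intros H0 Hf.
  rewrite <- (is_series_unique _ _ (is_series_single k (f k))).
  apply Series_le_gen; auto. exists (f k); apply is_series_single.
  intro n; unfold single. destruct (Nat.eqb n k) eqn:E.
  apply Nat.eqb_eq in E; subst; lra. auto.
Qed.

Lemma in_l1_le u v : in_l1 v -> (forall n, Rabs (u n) <= Rabs (v n)) -> in_l1 u.
Proof.
  intros Hv H. unfold in_l1. apply (@ex_series_le R_AbsRing R_CompleteNormedModule _ (fun n => Rabs (v n))); auto.
  intro n. change (Rabs (Rabs (u n)) <= Rabs (v n)). rewrite Rabs_Rabsolu. auto.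
Qed.

Lemma in_l1_scal c u : in_l1 u -> in_l1 (seq_scal c u).
Proof.
  intros H. unfold in_l1, seq_scal.
  apply ex_series_ext with (fun n => Rabs c * Rabs (u n)).
  intro; rewrite Rabs_mult; auto.
  apply (ex_series_scal_l (Rabs c) _ H).
Qed.

Lemma in_l1_add u v : in_l1 u -> in_l1 v -> in_l1 (seq_add u v).
Proof.
  intros Hu Hv. unfold in_l1.
  apply (@ex_series_le R_AbsRing R_CompleteNormedModule _ (fun n => Rabs (u n) + Rabs (v n))).
  intro n. change (Rabs (Rabs (seq_add u v n)) <= Rabs (u n) + Rabs (v n)).
  rewrite Rabs_Rabsolu. apply Rabs_triang.
  apply (ex_series_plus _ _ Hu Hv).
Qed.

Lemma in_l1_sub u v : in_l1 u -> in_l1 v -> in_l1 (seq_sub u v).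
Proof.
  intros Hu Hv. unfold in_l1.
  apply (@ex_series_le R_AbsRing R_CompleteNormedModule _ (fun n => Rabs (u n) + Rabs (v n))).
  intro n. change (Rabs (Rabs (seq_sub u v n)) <= Rabs (u n) + Rabs (v n)).
  rewrite Rabs_Rabsolu. unfold seq_sub, Rminus. eapply Rle_trans; [apply Rabs_triang|rewrite Rabs_Ropp; lra].
  apply (ex_series_plus _ _ Hu Hv).
Qed.

Lemma in_l1_single k c : in_l1 (single k c).
Proof.
  unfold in_l1. apply ex_series_ext with (single k (Rabs c)).
  intro; rewrite single_abs; auto. exists (Rabs c); apply is_series_single.
Qed.

Lemma l1norm_scal c u : in_l1 u -> l1norm (seq_scal c u) = Rabs c * l1norm u.
Proof.
  intros H. unfold l1norm, seq_scal. rewrite <- Series_scal_l.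
  apply Series_ext. intro; apply Rabs_mult.
Qed.

Lemma l1norm_single k c : l1norm (single k c) = Rabs c.
Proof.
  unfold l1norm. rewrite (Series_ext _ (single k (Rabs c))).
  apply is_series_unique, is_series_single. intro; apply single_abs.
Qed.

Lemma pairing_test b m n0 c :
  pairing b (fun n => single m 1 n - c * single n0 1 n) = b m - c * b n0.
Proof.
  unfold pairing.
  rewrite (Series_ext _ (fun n => single m (b m) n - c * single n0 (b n0) n)).
  apply is_series_unique. apply isB. apply is_series_single. apply isZ, is_series_single.
  intro n. unfold single.
  destruct (Nat.eqb n m) eqn:E1; destruct (Nat.eqb n n0) eqn:E2;
  try apply Nat.eqb_eq in E1; try apply Nat.eqb_eq in E2; subst; ring.
Qed.

Lemma annih_char a n0 b : a n0 <> 0 -> annihilator (hyperplane a) b -> b = seq_scal (b n0 / a n0) a.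
Proof.
  intros Ha [Hb Hy]. apply functional_extensionality. intro m.
  set (y := fun n => single m 1 n - (a m / a n0) * single n0 1 n).
  assert (Hyp : hyperplane a y).
  { split. unfold in_c0, y.
    replace (Finite 0) with (Finite (0 - a m / a n0 * 0)) by (f_equal; ring).
    apply is_lim_seq_minus'. apply single_lim.
    apply is_lim_seq_scal_l with (lu := Finite 0). apply single_lim.
    unfold y. rewrite pairing_test. field; auto. }
  specialize (Hy y Hyp). unfold y in Hy. rewrite pairing_test in Hy.
  unfold seq_scal. replace (b n0 / a n0 * a m) with (a m / a n0 * b n0) by (field; auto). lra.
Qed.

Lemma annih_scal a mu : in_l1 a -> annihilator (hyperplane a) (seq_scal mu a).
Proof.
  intros H. split. apply in_l1_scal; auto.
  intros y [_ Hy]. unfold pairing, seq_scal in *.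
  rewrite (Series_ext _ (fun n => mu * (a n * y n))). rewrite Series_scal_l, Hy. ring.
  intro; ring.
Qed.

Lemma SU_part a n0 : in_l1 a -> l1norm a = 1 -> 1/2 < Rabs (a n0) -> property_SU (hyperplane a).
Proof.
  intros Ha H1 Hn0.
  assert (Hz : a n0 <> 0). { intro E; rewrite E, Rabs_R0 in Hn0; lra. }
  assert (Hpos : 0 < Rabs (a n0)) by lra.
  exists (fun x => seq_scal (x n0 / a n0) a). split.
  - split; [|split; [|split; [|split; [|split; [|split]]]]].
    + intros; apply in_l1_scal; auto.
    + intros x y _ _. apply functional_extensionality; intro n.
      unfold seq_add, seq_scal. field; auto.
    + intros c x _. apply functional_extensionality; intro n.
      unfold seq_scal. field; auto.
    + exists (/ Rabs (a n0)). intros x Hx. rewrite l1norm_scal, H1 by auto.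
      rewrite Rmult_1_r. unfold Rdiv. rewrite Rabs_mult, Rabs_inv, Rmult_comm.
      apply Rmult_le_compat_l. left; apply Rinv_0_lt_compat; auto.
      apply (term_le (fun n => Rabs (x n))); auto. intro; apply Rabs_pos.
    + intros x _. apply functional_extensionality; intro n.
      unfold seq_scal. f_equal. field; auto.
    + intros x _. apply annih_scal; auto.
    + intros m Hm. exists m. split. destruct Hm; auto.
      symmetry. apply annih_char; auto.
  - intros g yp [x [Hx Hg]] Hyp Hne.
    pose proof (annih_char a n0 yp Hz Hyp) as Eyp.
    set (mu := yp n0 / a n0) in Eyp.
    assert (Hmu : mu <> 0).
    { intro E. apply Hne. rewrite Eyp, E. apply functional_extensionality; intro n.
      unfold seq_scal, seq_zero; ring. }
    assert (Hgl : in_l1 g). { rewrite Hg. apply in_l1_sub; auto. apply in_l1_scal; auto. }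
    assert (Hg0 : g n0 = 0). { rewrite Hg. unfold seq_sub, seq_scal. field; auto. }
    assert (Hm : 0 < Rabs mu) by (apply Rabs_pos_lt; auto).
    set (G := fun n => Rabs (g n) - Rabs mu * Rabs (a n) + single n0 (2 * Rabs mu * Rabs (a n0)) n).
    assert (HG : is_series G (l1norm g - Rabs mu * 1 + 2 * Rabs mu * Rabs (a n0))).
    { apply isD. apply isB. apply Series_correct; auto. rewrite <- H1.
      apply isZ. apply Series_correct; auto. apply is_series_single. }
    assert (Hle : Series G <= l1norm (seq_add g yp)).
    { apply Series_le_gen. eexists; eauto. apply in_l1_add; auto. destruct Hyp; auto.
      intro n. unfold G, single. rewrite Eyp. unfold seq_add, seq_scal.
      destruct (Nat.eqb n n0) eqn:E.
      - apply Nat.eqb_eq in E; rewrite E. rewrite Hg0, Rabs_R0, Rplus_0_l, Rabs_mult. lra.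
      - rewrite Rplus_0_r, <- Rabs_mult.
        pose proof (Rabs_triang (g n + mu * a n) (- (mu * a n))).
        rewrite Rabs_Ropp in H. replace (g n + mu * a n + - (mu * a n)) with (g n) in H by ring.
        lra. }
    rewrite (is_series_unique _ _ HG) in Hle.
    assert (0 < Rabs mu * (2 * Rabs (a n0) - 1)) by (apply Rmult_lt_0_compat; lra).
    nra.
Qed.

Lemma get_m a n0 : in_l1 a -> l1norm a = 1 -> Rabs (a n0) < 1 ->
  exists m, m <> n0 /\ a m <> 0 /\ Rabs (a m) + Rabs (a n0) <= 1.
Proof.
  intros Ha H1 Hlt.
  destruct (classic (exists m, m <> n0 /\ a m <> 0)) as [[m [Hm Ham]]|Hno].
  - exists m. repeat split; auto. rewrite <- H1. unfold l1norm.
    rewrite <- (is_series_unique _ _ (isD _ _ _ _ (is_series_single m (Rabs (a m))) (is_series_single n0 (Rabs (a n0))))).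
    apply Series_le_gen. eexists; apply isD; apply is_series_single. auto.
    intro n. pose proof (Rabs_pos (a n)). unfold single. destruct (Nat.eqb n m) eqn:E1; destruct (Nat.eqb n n0) eqn:E2;
      try apply Nat.eqb_eq in E1; try apply Nat.eqb_eq in E2; subst; try lia; lra.
  - exfalso. assert (l1norm a = Rabs (a n0)).
    { unfold l1norm. rewrite (Series_ext _ (single n0 (Rabs (a n0)))).
      apply is_series_unique, is_series_single.
      intro n. unfold single. destruct (Nat.eqb n n0) eqn:E.
      apply Nat.eqb_eq in E; subst; auto.
      apply Nat.eqb_neq in E. destruct (Req_dec (a n) 0) as [Z|Z].
      rewrite Z; apply Rabs_R0. exfalso; apply Hno; exists n; auto. }
    lra.
Qed.

Lemma notHB_part a n0 : in_l1 a -> l1norm a = 1 -> 1/2 < Rabs (a n0) -> Rabs (a n0) < 1 ->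
  ~ property_HB (hyperplane a).
Proof.
  intros Ha H1 Hn0 Hlt [P [[Pl1 [Padd [Pscal [_ [Pidem [Prange Ponto]]]]]] [SU [[Pnorm _] _]]]].
  assert (Hz : a n0 <> 0). { intro E; rewrite E, Rabs_R0 in Hn0; lra. }
  destruct (get_m a n0 Ha H1 Hlt) as [m [Hmn [Ham Hsum]]].
  assert (Hamp : 0 < Rabs (a m)) by (apply Rabs_pos_lt; auto).
  set (e := single m 1).
  assert (He : in_l1 e) by apply in_l1_single.
  assert (Hen : l1norm e = 1) by (unfold e; rewrite l1norm_single; apply Rabs_R1).
  pose proof (annih_char a n0 (P e) Hz (Prange e He)) as EP.
  set (mu := P e n0 / a n0) in EP.
  assert (Hmu1 : Rabs mu <= 1).
  { pose proof (Pnorm e He) as B. rewrite EP, l1norm_scal, H1, Hen in B by auto. lra. }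
  assert (Paa : P a = a).
  { assert (Aa : annihilator (hyperplane a) a).
    { replace a with (seq_scal 1 a) at 2. apply annih_scal; auto.
      apply functional_extensionality; intro; unfold seq_scal; ring. }
    destruct (Ponto a Aa) as [y [Hy Py]]. rewrite <- Py at 1. rewrite Pidem; auto. }
  assert (Hmu : mu <> 0).
  { intro Z. set (r := seq_add a (seq_scal (- a m) e)).
    assert (Hr : in_l1 r) by (apply in_l1_add; auto; apply in_l1_scal; auto).
    assert (Pr : P r = a).
    { unfold r. rewrite Padd, Pscal, Paa, EP, Z by (auto; apply in_l1_scal; auto).
      apply functional_extensionality; intro; unfold seq_add, seq_scal; ring. }
    assert (Hrn : l1norm r = 1 - Rabs (a m)).
    { unfold l1norm. rewrite (Series_ext _ (fun n => Rabs (a n) - single m (Rabs (a m)) n)).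
      apply is_series_unique. rewrite <- H1. apply isB. apply Series_correct; auto.
      apply is_series_single.
      intro n. unfold r, e, seq_add, seq_scal, single. destruct (Nat.eqb n m) eqn:E.
      apply Nat.eqb_eq in E; rewrite E. rewrite Rmult_1_r, Rplus_opp_r, Rabs_R0; ring.
      rewrite Rmult_0_r, Rplus_0_r; ring. }
    pose proof (Pnorm r Hr) as B. rewrite Pr, H1, Hrn in B. lra. }
  assert (Hmp : 0 < Rabs mu) by (apply Rabs_pos_lt; auto).
  assert (Hyp : P e <> seq_zero).
  { intro E. assert (P e n0 = 0) by (rewrite E; reflexivity).
    rewrite EP in H. unfold seq_scal in H. apply Rmult_integral in H. destruct H; auto. }
  pose proof (SU (seq_sub e (P e)) (P e) (ex_intro _ e (conj He eq_refl)) (Prange e He) Hyp) as S.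
  replace (seq_add (seq_sub e (P e)) (P e)) with e in S
    by (apply functional_extensionality; intro; unfold seq_add, seq_sub; ring).
  rewrite Hen in S. rewrite EP in S.
  set (G := fun n => Rabs mu * Rabs (a n) + single m (1 - 2 * Rabs mu * Rabs (a m)) n).
  assert (HG : is_series G (Rabs mu * 1 + (1 - 2 * Rabs mu * Rabs (a m)))).
  { apply isD. rewrite <- H1. apply isZ. apply Series_correct; auto. apply is_series_single. }
  assert (Hle : Series G <= l1norm (seq_sub e (seq_scal mu a))).
  { apply Series_le_gen. eexists; eauto. apply in_l1_sub; auto. apply in_l1_scal; auto.
    intro n. unfold G, e, single, seq_sub, seq_scal.
    destruct (Nat.eqb n m) eqn:E.
    - apply Nat.eqb_eq in E; subst.
      pose proof (Rabs_triang_inv 1 (mu * a m)). rewrite Rabs_R1, Rabs_mult in H. lra.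
    - rewrite Rplus_0_r, Rminus_0_l, Rabs_Ropp, Rabs_mult. lra. }
  rewrite (is_series_unique _ _ HG) in Hle.
  assert (0 < Rabs mu * (1 - 2 * Rabs (a m))) by (apply Rmult_lt_0_compat; lra).
  nra.
Qed.
Theorem theorem3p16 (a : nat -> R) :
  in_l1 a ->
  l1norm a = 1 ->
  (exists s, is_lub (fun r => exists n, r = Rabs (a n)) s /\ 1/2 < s /\ s < 1) ->
  property_SU (hyperplane a) /\ ~ property_HB (hyperplane a).
Proof.
  intros Ha H1 [s [[Hub Hlub] [Hs1 Hs2]]].
  assert (Ex : exists n0, 1/2 < Rabs (a n0)).
  { apply NNPP. intro Hno. assert (s <= 1/2).
    { apply Hlub. intros r [n ->]. apply Rnot_lt_le. intro; apply Hno; exists n; auto. }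
    lra. }
  destruct Ex as [n0 Hn0].
  assert (Rabs (a n0) <= s) by (apply Hub; exists n0; auto).
  split. eapply SU_part; eauto. apply (notHB_part a n0); auto; lra.
Qed.
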